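(* Let $h'_1,h'_2,l'_1,l'_2,\alpha'_1,\alpha'_2,\beta'\in\mathbb{C}$ and assume that $N:=(h'_1-h'_2-l'_1+l'_2+\alpha'_1-\alpha'_2+\beta'-2)/2$ is a non-negative integer and $\beta'\notin\{1,\dots,N\}$. Let $c_n(E')$ $(n=0,\dots,N)$ and $c(E')$ be the polynomials of the context constructed from the parameters $h''_1=l'_1,\ l''_1=h'_1,\ h''_2=h'_2,\ l''_2=l'_2,\ \alpha''_1=\alpha'_1,\ \alpha''_2=\alpha'_2,\ \beta''=\beta'$ (with this $N$), and let $E'_0$ satisfy $c(E'_0)=0$. Then the functions $$h_1(s)=s^{(h'_1+h'_2-l'_1-l'_2-\alpha'_1-\alpha'_2-\beta'+2)/2}\frac{(s/(q^{l'_1-1/2}t_1);q)_\infty}{(s/(q^{h'_1-1/2}t_1);q)_\infty}\sum_{n=0}^{N}c_n(E'_0)s^{n},$$ $$h_2(s)=s^{-\alpha'_2-N}\frac{(q^{h'_1+1/2}t_1/s;q)_\infty}{(q^{l'_1+1/2}t_1/s;q)_\infty}\sum_{n=0}^{N}c_n(E'_0)s^{n}$$ satisfy $A^{\langle4\rangle}(s;h'_1,h'_2,l'_1,l'_2,\alpha'_1,\alpha'_2,\beta')h_i(s)=E'_0h_i(s)$ for $i=1,2$.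
   Context: $q\in\mathbb{C}$ with $0<|q|<1$; powers $q^a$ via a fixed branch of $\log q$, and $s^{a}$ a fixed branch with $(qs)^a=q^as^a$. $(a;q)_\infty=\prod_{k\ge0}(1-aq^k)$, $(a;q)_n=(a;q)_\infty/(aq^n;q)_\infty$ for $n\in\mathbb{Z}$, $(a_1,\dots,a_m;q)_n=\prod_i(a_i;q)_n$. $t_1,t_2$ are fixed non-zero constants; $T_s^{\pm1}g(s)=g(q^{\pm1}s)$ and $A^{\langle 4\rangle}(s;h_1,h_2,l_1,l_2,\alpha_1,\alpha_2,\beta)=s^{-1}(s-q^{h_1+1/2}t_1)(s-q^{h_2+1/2}t_2)T_s^{-1}+q^{\alpha_1+\alpha_2}s^{-1}(s-q^{l_1-1/2}t_1)(s-q^{l_2-1/2}t_2)T_s-\{(q^{\alpha_1}+q^{\alpha_2})s+q^{(h_1+h_2+l_1+l_2+\alpha_1+\alpha_2)/2}(q^{\beta/2}+q^{-\beta/2})t_1t_2s^{-1}\}$. Polynomials: given $(h''_1,h''_2,l''_1,l''_2,\alpha''_1,\alpha''_2,\beta'')$ and $N$, put $\lambda''_1=(h''_1+h''_2-l''_1-l''_2-\alpha''_1-\alpha''_2-\beta''+2)/2$, $x''_n=t_1t_2q^{1-n+h''_1+h''_2-\lambda''_1}(1-q^{n})(1-q^{n-\beta''})$, $y''_n=q^{3/2-n-\lambda''_1}(q^{h''_1}t_1+q^{h''_2}t_2)+q^{n-3/2+\lambda''_1+\alpha''_1+\alpha''_2}(q^{l''_1}t_1+q^{l''_2}t_2)$,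 $z''_n=q^{2-n-\lambda''_1}(1-q^{n-2+\lambda''_1+\alpha''_1})(1-q^{n-2+\lambda''_1+\alpha''_2})$; $c_{-1}=0$, $c_0=1$, $c_n(E'')x''_n=c_{n-1}(E'')(E''+y''_n)-c_{n-2}(E'')z''_n$ ($1\le n\le N$), $c(E'')=x''_1\cdots x''_N[c_N(E'')(E''+y''_{N+1})-c_{N-1}(E'')z''_{N+1}]$. *)

(* Defs.v *)
From Stdlib Require Import Reals.
From Coquelicot Require Export Coquelicot.
Open Scope C_scope.

Definition Cexp (z : C) : C :=
  (exp (Re z) * cos (Im z), exp (Re z) * sin (Im z))%R.

Definition Cnat (n : nat) : C := RtoC (INR n).

(* q^a := exp (a * L) where L is a fixed branch of log q (Cexp L = q). *)
Definition qpow (L a : C) : C := Cexp (a * L).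

(* s^a := exp (a * lg s), where lg is a fixed branch of log with
   lg (q s) = L + lg s, so that (q s)^a = q^a s^a. *)
Definition spow (lg : C -> C) (a s : C) : C := Cexp (a * lg s).

Fixpoint Cpown (x : C) (n : nat) : C :=
  match n with O => RtoC 1 | S m => x * Cpown x m end.

Fixpoint qpoch (q a : C) (n : nat) : C :=
  match n with O => RtoC 1 | S m => qpoch q a m * (RtoC 1 - a * Cpown q m) end.

Definition qpoch_inf (q a : C) : C :=
  (real (Lim_seq (fun n => Re (qpoch q a n))), real (Lim_seq (fun n => Im (qpoch q a n)))).

(* The operator A^<4>(s; h1,h2,l1,l2,al1,al2,be) applied to g at s;
   T_s^{-1} g (s) = g (s / q), T_s g (s) = g (q s). *)
Definition A4 (q L t1 t2 h1 h2 l1 l2 al1 al2 be : C) (g : C -> C) (s : C) : C :=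
  / s * (s - qpow L (h1 + /2) * t1) * (s - qpow L (h2 + /2) * t2) * g (s / q)
  + qpow L (al1 + al2) * / s * (s - qpow L (l1 - /2) * t1)
      * (s - qpow L (l2 - /2) * t2) * g (q * s)
  - ((qpow L al1 + qpow L al2) * s
     + qpow L ((h1 + h2 + l1 + l2 + al1 + al2) / 2)
       * (qpow L (be / 2) + qpow L (- be / 2)) * t1 * t2 * / s) * g s.

(* Coefficients of the three-term recurrence (parameters are the ''-ones). *)
Definition lam1 (h1 h2 l1 l2 al1 al2 be : C) : C :=
  (h1 + h2 - l1 - l2 - al1 - al2 - be + 2) / 2.

Definition xco (L t1 t2 h1 h2 l1 l2 al1 al2 be : C) (n : nat) : C :=
  t1 * t2 * qpow L (1 - Cnat n + h1 + h2 - lam1 h1 h2 l1 l2 al1 al2 be)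
  * (1 - qpow L (Cnat n)) * (1 - qpow L (Cnat n - be)).

Definition yco (L t1 t2 h1 h2 l1 l2 al1 al2 be : C) (n : nat) : C :=
  let lm := lam1 h1 h2 l1 l2 al1 al2 be in
  qpow L (3 / 2 - Cnat n - lm) * (qpow L h1 * t1 + qpow L h2 * t2)
  + qpow L (Cnat n - 3 / 2 + lm + al1 + al2) * (qpow L l1 * t1 + qpow L l2 * t2).

Definition zco (L t1 t2 h1 h2 l1 l2 al1 al2 be : C) (n : nat) : C :=
  let lm := lam1 h1 h2 l1 l2 al1 al2 be in
  qpow L (2 - Cnat n - lm) * (1 - qpow L (Cnat n - 2 + lm + al1))
  * (1 - qpow L (Cnat n - 2 + lm + al2)).

(* cpair n = (c_{n-1}(E), c_n(E)), with c_{-1} = 0, c_0 = 1 and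
   c_n x_n = c_{n-1} (E + y_n) - c_{n-2} z_n. *)
Fixpoint cpair (L t1 t2 h1 h2 l1 l2 al1 al2 be E : C) (n : nat) : C * C :=
  match n with
  | O => (RtoC 0, RtoC 1)
  | S m =>
      let p := cpair L t1 t2 h1 h2 l1 l2 al1 al2 be E m in
      (snd p,
       (snd p * (E + yco L t1 t2 h1 h2 l1 l2 al1 al2 be (S m))
        - fst p * zco L t1 t2 h1 h2 l1 l2 al1 al2 be (S m))
       / xco L t1 t2 h1 h2 l1 l2 al1 al2 be (S m))
  end.

Definition cn (L t1 t2 h1 h2 l1 l2 al1 al2 be E : C) (n : nat) : C :=
  snd (cpair L t1 t2 h1 h2 l1 l2 al1 al2 be E n).

Fixpoint xprod (L t1 t2 h1 h2 l1 l2 al1 al2 be : C) (N : nat) : C :=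
  match N with
  | O => RtoC 1
  | S m => xprod L t1 t2 h1 h2 l1 l2 al1 al2 be m * xco L t1 t2 h1 h2 l1 l2 al1 al2 be (S m)
  end.

Definition cpoly (L t1 t2 h1 h2 l1 l2 al1 al2 be : C) (N : nat) (E : C) : C :=
  let p := cpair L t1 t2 h1 h2 l1 l2 al1 al2 be E N in
  xprod L t1 t2 h1 h2 l1 l2 al1 al2 be N
  * (snd p * (E + yco L t1 t2 h1 h2 l1 l2 al1 al2 be (S N))
     - fst p * zco L t1 t2 h1 h2 l1 l2 al1 al2 be (S N)).

Fixpoint psum (c : nat -> C) (s : C) (N : nat) : C :=
  match N with
  | O => c O
  | S m => psum c s m + c (S m) * Cpown s (S m)
  end.

(* Main.v *)
Require Import Defs.
From Stdlib Require Import Reals.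
From Coquelicot Require Import Coquelicot.
From Stdlib Require Import Lra Lia.
Open Scope C_scope.

Lemma Cexp_add a b : Cexp (a + b) = Cexp a * Cexp b.
Proof. destruct a as [a1 a2], b as [b1 b2]. unfold Cexp; simpl.
rewrite exp_plus, cos_plus, sin_plus. unfold Cmult; simpl. f_equal; ring. Qed.
Lemma Cexp_nz a : Cexp a <> 0.
Proof. unfold Cexp. intro H. injection H as H1 H2.
pose proof (exp_pos (Re a)). pose proof (sin2_cos2 (Im a)). unfold Rsqr in *.
apply Rmult_integral in H1; apply Rmult_integral in H2.
destruct H1; [lra|]. destruct H2; [lra|]. rewrite H1, H2 in H0. lra. Qed.

Lemma Cmod_Cpown q n : Cmod (Cpown q n) = (Cmod q ^ n)%R.
Proof. induction n; simpl. apply Cmod_1. rewrite Cmod_mult, IHn. reflexivity. Qed.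

Lemma qpoch_bound q x n : (Cmod q < 1)%R ->
  (Cmod (qpoch q x n) <= exp (Cmod x * (1 - Cmod q ^ n) / (1 - Cmod q)))%R.
Proof.
  intro Hq. induction n; simpl.
  - rewrite Cmod_1. replace (Cmod x * (1 - 1) / (1 - Cmod q))%R with 0%R by (field; lra).
    rewrite exp_0; lra.
  - rewrite Cmod_mult.
    assert (H1 : (Cmod (1 - x * Cpown q n) <= 1 + Cmod x * Cmod q ^ n)%R).
    { unfold Cminus. eapply Rle_trans. apply Cmod_triangle.
      rewrite Cmod_opp, Cmod_mult, Cmod_Cpown, Cmod_1. lra. }
    assert (H2 : (1 + Cmod x * Cmod q ^ n <= exp (Cmod x * Cmod q ^ n))%R).
    { apply exp_ineq1_le. }
    replace (Cmod x * (1 - Cmod q * Cmod q ^ n) / (1 - Cmod q))%R with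
      (Cmod x * (1 - Cmod q ^ n) / (1 - Cmod q) + Cmod x * Cmod q ^ n)%R by (field; lra).
    rewrite exp_plus. apply Rmult_le_compat; try apply Cmod_ge_0; try lra.
Qed.

Lemma exp_le' a b : (a <= b)%R -> (exp a <= exp b)%R.
Proof. intro H. destruct (Rle_lt_or_eq_dec _ _ H). left; apply exp_increasing; auto. subst; lra. Qed.

Lemma pow_le1 x n : (0 <= x <= 1)%R -> (x ^ n <= 1)%R.
Proof. intro H. induction n; simpl. lra. pose proof (pow_le x n (proj1 H)). nra. Qed.

Lemma conv_comp (f : C -> R) (Hf : forall z, (Rabs (f z) <= Cmod z)%R)
  (Hl : forall a b, f (a - b) = (f a - f b)%R) q x :
  (Cmod q < 1)%R -> ex_finite_lim_seq (fun n => f (qpoch q x n)).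
Proof.
  intro Hq.
  set (M := exp (Cmod x / (1 - Cmod q))).
  assert (HM : forall n, (Cmod (qpoch q x n) <= M)%R).
  { intro n. eapply Rle_trans. apply qpoch_bound; auto. unfold M.
    apply exp_le'. pose proof (Cmod_ge_0 q). pose proof (Cmod_ge_0 x).
    pose proof (pow_le (Cmod q) n H).
    unfold Rdiv. apply Rmult_le_compat_r. apply Rlt_le, Rinv_0_lt_compat; lra.
    assert (Cmod q ^ n <= 1)%R. { apply pow_le1; lra. } nra. }
  set (u := fun n => f (qpoch q x n)).
  set (d := fun n => (u (S n) - u n)%R).
  assert (Hd : ex_series d).
  { apply (@ex_series_le R_AbsRing R_CompleteNormedModule d) with (b := fun n => (Cmod q ^ n * (M * Cmod x))%R).
    - intro n. change (norm (d n)) with (Rabs (d n)). unfold d, u.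
      rewrite <- Hl. simpl qpoch.
      replace (qpoch q x n * (1 - x * Cpown q n) - qpoch q x n) with
        (- (qpoch q x n * x * Cpown q n)) by ring.
      eapply Rle_trans. apply Hf. rewrite Cmod_opp, !Cmod_mult, Cmod_Cpown.
      pose proof (Cmod_ge_0 x). pose proof (pow_le (Cmod q) n (Cmod_ge_0 q)).
      specialize (HM n). replace (Cmod q ^ n * (M * Cmod x))%R with (M * Cmod x * Cmod q ^ n)%R by ring.
      apply Rmult_le_compat_r; auto. apply Rmult_le_compat_r; auto.
    - apply ex_series_scal_r. apply ex_series_geom. rewrite Rabs_pos_eq; auto. apply Cmod_ge_0. }
  destruct Hd as [l Hl2].
  assert (Hs : forall n, sum_n d n = (u (S n) - u O)%R).
  { induction n. rewrite sum_O. reflexivity. rewrite sum_Sn, IHn. unfold d. unfold plus; simpl. ring. }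
  exists (l + u O)%R. apply is_lim_seq_incr_1.
  apply is_lim_seq_ext with (u := fun n => (sum_n d n + u O)%R).
  { intro n. rewrite Hs. ring. }
  apply is_lim_seq_plus'. exact Hl2. apply is_lim_seq_const.
Qed.

Lemma Re_minus a b : Re (a - b) = (Re a - Re b)%R.
Proof. destruct a, b; reflexivity. Qed.
Lemma Im_minus a b : Im (a - b) = (Im a - Im b)%R.
Proof. destruct a, b; reflexivity. Qed.

Lemma qpoch_S q x n : qpoch q x (S n) = (1 - x) * qpoch q (q * x) n.
Proof. induction n. simpl. ring.
  change (qpoch q x (S (S n))) with (qpoch q x (S n) * (1 - x * Cpown q (S n))).
  rewrite IHn. simpl. ring. Qed.

Lemma im_le_Cmod c : (Rabs (Im c) <= Cmod c)%R.
Proof. pose proof (Cmod2_alt c). pose proof (Cmod_ge_0 c). pose proof (Rabs_pos (Im c)).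
  pose proof (pow2_abs (Im c)). destruct (Rle_or_lt (Rabs (Im c)) (Cmod c)); auto.
  assert (Re c ^ 2 >= 0)%R by (apply Rle_ge, pow2_ge_0). nra. Qed.

Lemma qpoch_inf_fe q x : (Cmod q < 1)%R -> qpoch_inf q x = (1 - x) * qpoch_inf q (q * x).
Proof.
  intro Hq.
  destruct (conv_comp Re re_le_Cmod Re_minus q (q * x) Hq) as [la Ha].
  destruct (conv_comp Im im_le_Cmod Im_minus q (q * x) Hq) as [lb Hb].
  unfold qpoch_inf.
  rewrite (is_lim_seq_unique _ _ Ha), (is_lim_seq_unique _ _ Hb).
  assert (H1 : is_lim_seq (fun n => Re (qpoch q x n)) (Re (1 - x) * la - Im (1 - x) * lb)%R).
  { apply is_lim_seq_incr_1.
    apply is_lim_seq_ext with (u := fun n => (Re (1 - x) * Re (qpoch q (q*x) n) - Im (1 - x) * Im (qpoch q (q*x) n))%R).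
    { intro n. rewrite qpoch_S. reflexivity. }
    apply is_lim_seq_minus'; apply (is_lim_seq_scal_l _ _ (Finite _)); auto. }
  assert (H2 : is_lim_seq (fun n => Im (qpoch q x n)) (Re (1 - x) * lb + Im (1 - x) * la)%R).
  { apply is_lim_seq_incr_1.
    apply is_lim_seq_ext with (u := fun n => (Re (1 - x) * Im (qpoch q (q*x) n) + Im (1 - x) * Re (qpoch q (q*x) n))%R).
    { intro n. rewrite qpoch_S. reflexivity. }
    apply is_lim_seq_plus'; apply (is_lim_seq_scal_l _ _ (Finite _)); auto. }
  rewrite (is_lim_seq_unique _ _ H1), (is_lim_seq_unique _ _ H2). simpl.
  unfold Cmult. simpl. reflexivity.
Qed.

Lemma qpow_mul L a b : qpow L a * qpow L b = qpow L (a + b).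
Proof. unfold qpow. rewrite <- Cexp_add. f_equal. ring. Qed.
Lemma qpow_nz L a : qpow L a <> 0.
Proof. apply Cexp_nz. Qed.
Lemma qpow_inv L a : / qpow L a = qpow L (- a).
Proof. assert (H : qpow L a * qpow L (-a) = 1).
  { rewrite qpow_mul. unfold qpow. replace ((a + - a) * L) with (RtoC 0) by ring.
    unfold Cexp. simpl. rewrite exp_0, cos_0, sin_0. unfold RtoC. f_equal; ring. }
  pose proof (qpow_nz L a).
  replace (qpow L (-a)) with (/ qpow L a * (qpow L a * qpow L (-a))) by (field; auto).
  rewrite H. ring. Qed.
Lemma Cnat_S n : Cnat (S n) = Cnat n + 1.
Proof. unfold Cnat. rewrite S_INR. unfold RtoC, Cplus. simpl. f_equal; ring. Qed.
Lemma Cnat_0 : Cnat 0 = 0.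
Proof. reflexivity. Qed.

Ltac qtac := unfold lam1, Cdiv; rewrite ?qpow_inv, ?qpow_mul; apply f_equal; rewrite ?Cnat_S; field.

Lemma Fco L t1 t2 h1 h2 l1 l2 a1 a2 b E s n :
  let lam := lam1 l1 h2 h1 l2 a1 a2 b in
  let Qn := qpow L (Cnat n) in
  qpow L (- lam) * (s - qpow L (l1 + /2) * t1) * (s - qpow L (h2 + /2) * t2) * / Qn
  + qpow L (a1 + a2 + lam) * (s - qpow L (h1 - /2) * t1) * (s - qpow L (l2 - /2) * t2) * Qn
  - ((qpow L a1 + qpow L a2) * s * s
     + qpow L ((h1 + h2 + l1 + l2 + a1 + a2) / 2) * (qpow L (b / 2) + qpow L (- b / 2)) * t1 * t2
     + E * s)
  = zco L t1 t2 l1 h2 h1 l2 a1 a2 b (S (S n)) * s * s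
    - (E + yco L t1 t2 l1 h2 h1 l2 a1 a2 b (S n)) * s
    + xco L t1 t2 l1 h2 h1 l2 a1 a2 b n.
Proof.
  intros lam Qn. unfold zco, yco, xco. fold lam. unfold Qn.
  set (X1 := qpow L (h1/2)). set (X2 := qpow L (h2/2)).
  set (Y1 := qpow L (l1/2)). set (Y2 := qpow L (l2/2)).
  set (A1 := qpow L (a1/2)). set (A2 := qpow L (a2/2)).
  set (B := qpow L (b/2)). set (R := qpow L (/2)). set (Q := qpow L (Cnat n)).
  assert (E1 : qpow L (- lam) = X1*Y2*A1*A2*B*/Y1*/X2*/R*/R) by (unfold lam; subst X1 X2 Y1 Y2 A1 A2 B R; qtac).
  assert (E2 : qpow L (l1 + /2) = Y1*Y1*R) by (subst Y1 R; qtac).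
  assert (E3 : qpow L (h2 + /2) = X2*X2*R) by (subst X2 R; qtac).
  assert (E4 : qpow L (h1 - /2) = X1*X1*/R) by (subst X1 R; qtac).
  assert (E5 : qpow L (l2 - /2) = Y2*Y2*/R) by (subst Y2 R; qtac).
  assert (E6 : qpow L (a1 + a2 + lam) = A1*A2*Y1*X2*R*R*/X1*/Y2*/B) by (unfold lam; subst X1 X2 Y1 Y2 A1 A2 B R; qtac).
  assert (E7 : qpow L a1 = A1*A1) by (subst A1; qtac).
  assert (E8 : qpow L a2 = A2*A2) by (subst A2; qtac).
  assert (E9 : qpow L ((h1 + h2 + l1 + l2 + a1 + a2) / 2) = X1*X2*Y1*Y2*A1*A2) by (subst X1 X2 Y1 Y2 A1 A2; qtac).
  assert (E10 : qpow L (- b / 2) = / B) by (subst B; qtac).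
  assert (E11 : qpow L (2 - Cnat (S (S n)) - lam) = X1*Y2*A1*A2*B*/Y1*/X2*/R*/R*/Q) by (unfold lam; subst X1 X2 Y1 Y2 A1 A2 B R Q; qtac).
  assert (E12 : qpow L (Cnat (S (S n)) - 2 + lam + a1) = Q*Y1*X2*R*R*A1*/X1*/Y2*/A2*/B) by (unfold lam; subst X1 X2 Y1 Y2 A1 A2 B R Q; qtac).
  assert (E13 : qpow L (Cnat (S (S n)) - 2 + lam + a2) = Q*Y1*X2*R*R*A2*/X1*/Y2*/A1*/B) by (unfold lam; subst X1 X2 Y1 Y2 A1 A2 B R Q; qtac).
  assert (E14 : qpow L (3 / 2 - Cnat (S n) - lam) = X1*Y2*A1*A2*B*/Y1*/X2*/R*/Q) by (unfold lam; subst X1 X2 Y1 Y2 A1 A2 B R Q; qtac).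
  assert (E15 : qpow L l1 = Y1*Y1) by (subst Y1; qtac).
  assert (E16 : qpow L h2 = X2*X2) by (subst X2; qtac).
  assert (E17 : qpow L h1 = X1*X1) by (subst X1; qtac).
  assert (E18 : qpow L l2 = Y2*Y2) by (subst Y2; qtac).
  assert (E19 : qpow L (Cnat (S n) - 3 / 2 + lam + a1 + a2) = Q*Y1*X2*R*A1*A2*/X1*/Y2*/B) by (unfold lam; subst X1 X2 Y1 Y2 A1 A2 B R Q; qtac).
  assert (E20 : qpow L (1 - Cnat n + l1 + h2 - lam) = X1*Y2*A1*A2*B*Y1*X2*/Q) by (unfold lam; subst X1 X2 Y1 Y2 A1 A2 B R Q; qtac).
  assert (E21 : qpow L (Cnat n - b) = Q*/B*/B) by (subst B Q; qtac).
  rewrite E1, E2, E3, E4, E5, E6, E7, E8, E9, E10, E11, E12, E13, E14, E15, E16, E17, E18, E19, E20, E21.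
  assert (X1 <> 0) by apply qpow_nz. assert (X2 <> 0) by apply qpow_nz.
  assert (Y1 <> 0) by apply qpow_nz. assert (Y2 <> 0) by apply qpow_nz.
  assert (A1 <> 0) by apply qpow_nz. assert (A2 <> 0) by apply qpow_nz.
  assert (B <> 0) by apply qpow_nz. assert (R <> 0) by apply qpow_nz. assert (Q <> 0) by apply qpow_nz.
  field. repeat split; auto.
Qed.

Definition FL L t1 t2 h1 h2 l1 l2 a1 a2 b E s Qn :=
  let lam := lam1 l1 h2 h1 l2 a1 a2 b in
  qpow L (- lam) * (s - qpow L (l1 + /2) * t1) * (s - qpow L (h2 + /2) * t2) * / Qn
  + qpow L (a1 + a2 + lam) * (s - qpow L (h1 - /2) * t1) * (s - qpow L (l2 - /2) * t2) * Qn
  - ((qpow L a1 + qpow L a2) * s * s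
     + qpow L ((h1 + h2 + l1 + l2 + a1 + a2) / 2) * (qpow L (b / 2) + qpow L (- b / 2)) * t1 * t2
     + E * s).

Definition coreL L t1 t2 h1 h2 l1 l2 a1 a2 b E q s m :=
  let lam := lam1 l1 h2 h1 l2 a1 a2 b in
  let c := cn L t1 t2 l1 h2 h1 l2 a1 a2 b E in
  qpow L (- lam) * (s - qpow L (l1 + /2) * t1) * (s - qpow L (h2 + /2) * t2) * psum c (s / q) m
  + qpow L (a1 + a2 + lam) * (s - qpow L (h1 - /2) * t1) * (s - qpow L (l2 - /2) * t2) * psum c (q * s) m
  - ((qpow L a1 + qpow L a2) * s * s
     + qpow L ((h1 + h2 + l1 + l2 + a1 + a2) / 2) * (qpow L (b / 2) + qpow L (- b / 2)) * t1 * t2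
     + E * s) * psum c s m.

Lemma Cpown_nz (q : C) n : q <> 0 -> Cpown q n <> 0.
Proof. intro H. induction n; simpl. intro H1. injection H1. intros. lra.
  intro H1. apply IHn. transitivity (/ q * (q * Cpown q n)). field. exact H.
  rewrite H1. ring. Qed.
Lemma Cpown_div (s q : C) n : q <> 0 -> Cpown (s / q) n = Cpown s n * / Cpown q n.
Proof. intro H. induction n; simpl. field. rewrite IHn. field. split; auto. apply Cpown_nz; auto. Qed.
Lemma Cpown_mul (s q : C) n : Cpown (q * s) n = Cpown q n * Cpown s n.
Proof. induction n; simpl. ring. rewrite IHn. ring. Qed.
Lemma qpow_nat (L q : C) n : Cexp L = q -> qpow L (Cnat n) = Cpown q n.
Proof. intro H. induction n. unfold qpow, Cnat. simpl.
  replace (RtoC 0 * L) with (RtoC 0) by ring. unfold Cexp; simpl. rewrite exp_0, cos_0, sin_0. unfold RtoC; f_equal; ring.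
  rewrite Cnat_S. unfold qpow in *. replace ((Cnat n + 1) * L) with (Cnat n * L + L) by ring.
  rewrite Cexp_add, IHn, H. simpl. ring. Qed.

Lemma core_ind (L t1 t2 h1 h2 l1 l2 a1 a2 b E q s : C) N :
  Cexp L = q -> q <> 0 ->
  (forall n, (1 <= n <= N)%nat -> xco L t1 t2 l1 h2 h1 l2 a1 a2 b n <> 0) ->
  forall m, (m <= N)%nat ->
  coreL L t1 t2 h1 h2 l1 l2 a1 a2 b E q s m =
  Cpown s (S m) * (snd (cpair L t1 t2 l1 h2 h1 l2 a1 a2 b E m) * zco L t1 t2 l1 h2 h1 l2 a1 a2 b (S (S m)) * s
     + fst (cpair L t1 t2 l1 h2 h1 l2 a1 a2 b E m) * zco L t1 t2 l1 h2 h1 l2 a1 a2 b (S m)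
     - snd (cpair L t1 t2 l1 h2 h1 l2 a1 a2 b E m) * (E + yco L t1 t2 l1 h2 h1 l2 a1 a2 b (S m))).
Proof.
  intros HL Hq HX m. induction m; intro Hm.
  - assert (F : FL L t1 t2 h1 h2 l1 l2 a1 a2 b E s (qpow L (Cnat 0)) =
       zco L t1 t2 l1 h2 h1 l2 a1 a2 b 2 * s * s
    - (E + yco L t1 t2 l1 h2 h1 l2 a1 a2 b 1) * s
    + xco L t1 t2 l1 h2 h1 l2 a1 a2 b 0) by apply Fco.
    rewrite (qpow_nat L q 0 HL) in F. simpl Cpown in F.
    assert (X0 : xco L t1 t2 l1 h2 h1 l2 a1 a2 b 0 = 0).
    { unfold xco. rewrite (qpow_nat L q 0 HL). simpl. ring. }
    rewrite X0 in F.
    assert (H0 : coreL L t1 t2 h1 h2 l1 l2 a1 a2 b E q s 0 = FL L t1 t2 h1 h2 l1 l2 a1 a2 b E s 1).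
    { unfold coreL, FL, cn. simpl. field. }
    rewrite H0, F. simpl. ring.
  - assert (HXm : xco L t1 t2 l1 h2 h1 l2 a1 a2 b (S m) <> 0) by (apply HX; lia).
    assert (F : FL L t1 t2 h1 h2 l1 l2 a1 a2 b E s (qpow L (Cnat (S m))) =
       zco L t1 t2 l1 h2 h1 l2 a1 a2 b (S (S (S m))) * s * s
    - (E + yco L t1 t2 l1 h2 h1 l2 a1 a2 b (S (S m))) * s
    + xco L t1 t2 l1 h2 h1 l2 a1 a2 b (S m)) by apply Fco.
    rewrite (qpow_nat L q (S m) HL) in F.
    assert (Hsp : coreL L t1 t2 h1 h2 l1 l2 a1 a2 b E q s (S m) =
      coreL L t1 t2 h1 h2 l1 l2 a1 a2 b E q s m
      + cn L t1 t2 l1 h2 h1 l2 a1 a2 b E (S m) * Cpown s (S m) * FL L t1 t2 h1 h2 l1 l2 a1 a2 b E s (Cpown q (S m))).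
    { unfold coreL, FL. cbv zeta. change (psum ?c ?x (S m)) with (psum c x m + c (S m) * Cpown x (S m)).
      rewrite Cpown_div, Cpown_mul by auto. pose proof (Cpown_nz q (S m) Hq). field. auto. }
    rewrite Hsp, F, IHm by lia. unfold cn. simpl cpair.
    destruct (cpair L t1 t2 l1 h2 h1 l2 a1 a2 b E m) as [p1 p2]. simpl fst; simpl snd.
    change (Cpown s (S (S m))) with (s * Cpown s (S m)).
    field. auto.
Qed.

Lemma Cmult_nz_l (a b : C) : a * b <> 0 -> a <> 0.
Proof. intros H H1. apply H. rewrite H1. ring. Qed.
Lemma Cmult_nz_r (a b : C) : a * b <> 0 -> b <> 0.
Proof. intros H H1. apply H. rewrite H1. ring. Qed.

Lemma spow_div (lg : C -> C) (L q a s : C) :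
  (forall s : C, s <> 0 -> lg (q * s) = L + lg s) -> s <> 0 -> q <> 0 ->
  spow lg a (s / q) = qpow L (- a) * spow lg a s.
Proof. intros Hlg Hs Hq.
  assert (H : lg s = L + lg (s / q)).
  { rewrite <- Hlg. f_equal. field. auto. intro H. apply Hs.
    replace s with (q * (s / q)) by (field; auto). rewrite H. ring. }
  unfold spow, qpow. rewrite <- Cexp_add. f_equal. rewrite H. ring. Qed.

Lemma spow_mul (lg : C -> C) (L q a s : C) :
  (forall s : C, s <> 0 -> lg (q * s) = L + lg s) -> s <> 0 ->
  spow lg a (q * s) = qpow L a * spow lg a s.
Proof. intros Hlg Hs. unfold spow, qpow. rewrite <- Cexp_add. f_equal. rewrite Hlg; auto. ring. Qed.

Section G.
Variables (q L t1 : C) (lg : C -> C).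
Hypothesis Hq1 : (Cmod q < 1)%R.
Hypothesis Hq0 : q <> 0.
Hypothesis HL : Cexp L = q.
Hypothesis Hlg : forall s : C, s <> 0 -> lg (q * s) = L + lg s.
Hypothesis Ht1 : t1 <> 0.

Lemma qpow_h h : qpow L (h + /2) = q * qpow L (h - /2).
Proof. rewrite <- HL. replace (Cexp L) with (qpow L 1) by (unfold qpow; f_equal; ring).
  rewrite qpow_mul. f_equal. field. Qed.

Lemma h1_G1 (lam u h1 l1 s : C) :
  s <> 0 ->
  u = qpow L (- lam) * qpow L (h1 - /2) * / qpow L (l1 - /2) ->
  qpoch_inf q (s / q / (qpow L (h1 - /2) * t1)) <> 0 ->
  spow lg lam (s / q) * qpoch_inf q (s / q / (qpow L (l1 - /2) * t1))
    / qpoch_inf q (s / q / (qpow L (h1 - /2) * t1)) * (s - qpow L (h1 + /2) * t1)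
  = u * (s - qpow L (l1 + /2) * t1) *
    (spow lg lam s * qpoch_inf q (s / (qpow L (l1 - /2) * t1))
    / qpoch_inf q (s / (qpow L (h1 - /2) * t1))).
Proof.
  intros Hs Hu HD1.
  pose proof (qpow_nz L (h1 - /2)). pose proof (qpow_nz L (l1 - /2)).
  rewrite spow_div with (L := L) by auto.
  rewrite (qpoch_inf_fe q (s / q / (qpow L (l1 - / 2) * t1))) by auto.
  rewrite (qpoch_inf_fe q (s / q / (qpow L (h1 - / 2) * t1))) in HD1 |- * by auto.
  replace (q * (s / q / (qpow L (l1 - / 2) * t1))) with (s / (qpow L (l1 - / 2) * t1)) by (field; auto).
  replace (q * (s / q / (qpow L (h1 - / 2) * t1))) with (s / (qpow L (h1 - / 2) * t1)) in HD1 |- * by (field; auto).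
  rewrite !qpow_h.
  assert (E1 : s - q * qpow L (h1 - / 2) * t1 = - (q * (qpow L (h1 - / 2) * t1)) * (1 - s / q / (qpow L (h1 - / 2) * t1))) by (field; auto).
  assert (E2 : s - q * qpow L (l1 - / 2) * t1 = - (q * (qpow L (l1 - / 2) * t1)) * (1 - s / q / (qpow L (l1 - / 2) * t1))) by (field; auto).
  rewrite E1, E2, Hu.
  pose proof (Cmult_nz_l _ _ HD1). pose proof (Cmult_nz_r _ _ HD1).
  set (f := 1 - s / q / (qpow L (h1 - / 2) * t1)) in *.
  set (g := 1 - s / q / (qpow L (l1 - / 2) * t1)) in *.
  set (D0 := qpoch_inf q (s / (qpow L (h1 - / 2) * t1))) in *.
  set (N0 := qpoch_inf q (s / (qpow L (l1 - / 2) * t1))) in *.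
  field. repeat split; auto.
Qed.

Lemma h1_G2 (lam v h1 l1 a12 s : C) :
  s <> 0 ->
  v = qpow L a12 * qpow L lam * qpow L (l1 - /2) * / qpow L (h1 - /2) ->
  qpoch_inf q (s / (qpow L (h1 - /2) * t1)) <> 0 ->
  qpoch_inf q (q * s / (qpow L (h1 - /2) * t1)) <> 0 ->
  qpow L a12 * (spow lg lam (q * s) * qpoch_inf q (q * s / (qpow L (l1 - /2) * t1))
    / qpoch_inf q (q * s / (qpow L (h1 - /2) * t1))) * (s - qpow L (l1 - /2) * t1)
  = v * (s - qpow L (h1 - /2) * t1) *
    (spow lg lam s * qpoch_inf q (s / (qpow L (l1 - /2) * t1))
    / qpoch_inf q (s / (qpow L (h1 - /2) * t1))).
Proof.
  intros Hs Hv HD0 HD2.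
  pose proof (qpow_nz L (h1 - /2)). pose proof (qpow_nz L (l1 - /2)).
  rewrite spow_mul with (L := L) by auto.
  rewrite (qpoch_inf_fe q (s / (qpow L (l1 - / 2) * t1))) by auto.
  rewrite (qpoch_inf_fe q (s / (qpow L (h1 - / 2) * t1))) in HD0 |- * by auto.
  replace (q * (s / (qpow L (l1 - / 2) * t1))) with (q * s / (qpow L (l1 - / 2) * t1)) by (field; auto).
  replace (q * (s / (qpow L (h1 - / 2) * t1))) with (q * s / (qpow L (h1 - / 2) * t1)) in HD0 |- * by (field; auto).
  assert (E1 : s - qpow L (h1 - / 2) * t1 = - (qpow L (h1 - / 2) * t1) * (1 - s / (qpow L (h1 - / 2) * t1))) by (field; auto).
  assert (E2 : 1 - s / (qpow L (l1 - / 2) * t1) = (s - qpow L (l1 - / 2) * t1) * (- / (qpow L (l1 - / 2) * t1))) by (field; auto).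
  rewrite E1, E2, Hv.
  pose proof (Cmult_nz_l _ _ HD0).
  set (f := 1 - s / (qpow L (h1 - / 2) * t1)) in *.
  set (D2 := qpoch_inf q (q * s / (qpow L (h1 - / 2) * t1))) in *.
  set (N2 := qpoch_inf q (q * s / (qpow L (l1 - / 2) * t1))) in *.
  field. repeat split; auto.
Qed.

Lemma h2_G1 (nu u h1 l1 s : C) :
  s <> 0 ->
  u = qpow L (- nu) ->
  qpoch_inf q (qpow L (l1 + /2) * t1 / (s / q)) <> 0 ->
  qpoch_inf q (qpow L (l1 + /2) * t1 / s) <> 0 ->
  spow lg nu (s / q) * qpoch_inf q (qpow L (h1 + /2) * t1 / (s / q))
    / qpoch_inf q (qpow L (l1 + /2) * t1 / (s / q)) * (s - qpow L (h1 + /2) * t1)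
  = u * (s - qpow L (l1 + /2) * t1) *
    (spow lg nu s * qpoch_inf q (qpow L (h1 + /2) * t1 / s)
    / qpoch_inf q (qpow L (l1 + /2) * t1 / s)).
Proof.
  intros Hs Hu HR1 HR0.
  rewrite spow_div with (L := L) by auto.
  rewrite (qpoch_inf_fe q (qpow L (h1 + /2) * t1 / s)) by auto.
  rewrite (qpoch_inf_fe q (qpow L (l1 + /2) * t1 / s)) in HR0 |- * by auto.
  replace (q * (qpow L (h1 + /2) * t1 / s)) with (qpow L (h1 + /2) * t1 / (s / q)) by (field; auto).
  replace (q * (qpow L (l1 + /2) * t1 / s)) with (qpow L (l1 + /2) * t1 / (s / q)) in HR0 |- * by (field; auto).
  assert (E1 : s - qpow L (h1 + / 2) * t1 = s * (1 - qpow L (h1 + /2) * t1 / s)) by (field; auto).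
  assert (E2 : s - qpow L (l1 + / 2) * t1 = s * (1 - qpow L (l1 + /2) * t1 / s)) by (field; auto).
  rewrite E1, E2, Hu.
  pose proof (Cmult_nz_l _ _ HR0).
  set (f := 1 - qpow L (h1 + /2) * t1 / s) in *.
  set (g := 1 - qpow L (l1 + /2) * t1 / s) in *.
  set (R1 := qpoch_inf q (qpow L (l1 + /2) * t1 / (s / q))) in *.
  set (M1 := qpoch_inf q (qpow L (h1 + /2) * t1 / (s / q))) in *.
  field. repeat split; auto.
Qed.

Lemma h2_G2 (nu v h1 l1 a12 s : C) :
  s <> 0 ->
  v = qpow L a12 * qpow L nu ->
  qpoch_inf q (qpow L (l1 + /2) * t1 / s) <> 0 ->
  qpoch_inf q (qpow L (l1 + /2) * t1 / (q * s)) <> 0 ->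
  qpow L a12 * (spow lg nu (q * s) * qpoch_inf q (qpow L (h1 + /2) * t1 / (q * s))
    / qpoch_inf q (qpow L (l1 + /2) * t1 / (q * s))) * (s - qpow L (l1 - /2) * t1)
  = v * (s - qpow L (h1 - /2) * t1) *
    (spow lg nu s * qpoch_inf q (qpow L (h1 + /2) * t1 / s)
    / qpoch_inf q (qpow L (l1 + /2) * t1 / s)).
Proof.
  intros Hs Hv HR0 HR2.
  pose proof (qpow_nz L (h1 - /2)). pose proof (qpow_nz L (l1 - /2)).
  rewrite spow_mul with (L := L) by auto.
  rewrite (qpoch_inf_fe q (qpow L (h1 + /2) * t1 / (q * s))) by auto.
  rewrite (qpoch_inf_fe q (qpow L (l1 + /2) * t1 / (q * s))) in HR2 |- * by auto.
  replace (q * (qpow L (h1 + /2) * t1 / (q * s))) with (qpow L (h1 + /2) * t1 / s) by (field; auto).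
  replace (q * (qpow L (l1 + /2) * t1 / (q * s))) with (qpow L (l1 + /2) * t1 / s) in HR2 |- * by (field; auto).
  rewrite (qpow_h l1) in HR0, HR2. rewrite (qpow_h h1), (qpow_h l1).
  assert (E1 : s - qpow L (h1 - / 2) * t1 = s * (1 - q * qpow L (h1 - /2) * t1 / (q * s))) by (field; auto).
  assert (E2 : s - qpow L (l1 - / 2) * t1 = s * (1 - q * qpow L (l1 - /2) * t1 / (q * s))) by (field; auto).
  rewrite E1, E2, Hv.
  pose proof (Cmult_nz_l _ _ HR2). pose proof (Cmult_nz_r _ _ HR2).
  set (f := 1 - q * qpow L (h1 - /2) * t1 / (q * s)) in *.
  set (g := 1 - q * qpow L (l1 - /2) * t1 / (q * s)) in *.
  set (R0 := qpoch_inf q (q * qpow L (l1 - /2) * t1 / s)) in *.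
  set (M0 := qpoch_inf q (q * qpow L (h1 - /2) * t1 / s)) in *.
  field. repeat split; auto.
Qed.
End G.

Lemma Cmult_nz (a b : C) : a <> 0 -> b <> 0 -> a * b <> 0.
Proof. intros Ha Hb H. apply Hb. transitivity (/ a * (a * b)). field. auto. rewrite H. ring. Qed.

Lemma wrap (q L t1 t2 h1 h2 l1 l2 a1 a2 b E s u v G0 G1 G2 P0 P1 P2 : C) (g : C -> C) :
  s <> 0 -> g (s / q) = G1 * P1 -> g s = G0 * P0 -> g (q * s) = G2 * P2 ->
  G1 * (s - qpow L (h1 + /2) * t1) = u * (s - qpow L (l1 + /2) * t1) * G0 ->
  qpow L (a1 + a2) * G2 * (s - qpow L (l1 - /2) * t1) = v * (s - qpow L (h1 - /2) * t1) * G0 ->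
  u * (s - qpow L (l1 + /2) * t1) * (s - qpow L (h2 + /2) * t2) * P1
  + v * (s - qpow L (h1 - /2) * t1) * (s - qpow L (l2 - /2) * t2) * P2
  - ((qpow L a1 + qpow L a2) * s * s
     + qpow L ((h1 + h2 + l1 + l2 + a1 + a2) / 2) * (qpow L (b / 2) + qpow L (- b / 2)) * t1 * t2
     + E * s) * P0 = 0 ->
  A4 q L t1 t2 h1 h2 l1 l2 a1 a2 b g s = E * g s.
Proof.
  intros Hs Hg1 Hg0 Hg2 H1 H2 Hc. unfold A4. rewrite Hg1, Hg0, Hg2.
  set (e := qpow L (h1 + /2) * t1) in *. set (al1 := qpow L (l1 + /2) * t1) in *.
  set (c := qpow L (l1 - /2) * t1) in *. set (d := qpow L (h1 - /2) * t1) in *.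
  set (al2 := qpow L (h2 + /2) * t2) in *. set (be2 := qpow L (l2 - /2) * t2) in *.
  set (w := qpow L a1 + qpow L a2) in *.
  set (K := qpow L ((h1 + h2 + l1 + l2 + a1 + a2) / 2) * (qpow L (b / 2) + qpow L (- b / 2))) in *.
  set (qa := qpow L (a1 + a2)) in *.
  transitivity (/ s * ((s - al2) * P1 * (G1 * (s - e)) + (s - be2) * P2 * (qa * G2 * (s - c))
     - (w * s * s + K * t1 * t2) * (G0 * P0))).
  { field. auto. }
  rewrite H1, H2.
  transitivity (/ s * (G0 * (u * (s - al1) * (s - al2) * P1 + v * (s - d) * (s - be2) * P2
     - (w * s * s + K * t1 * t2 + E * s) * P0)) + E * (G0 * P0)).
  { field. auto. }
  rewrite Hc. field. auto.
Qed.

Lemma xprod_nz (L t1 t2 h1 h2 l1 l2 a1 a2 b : C) N :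
  (forall n, (1 <= n <= N)%nat -> xco L t1 t2 h1 h2 l1 l2 a1 a2 b n <> 0) ->
  forall m, (m <= N)%nat -> xprod L t1 t2 h1 h2 l1 l2 a1 a2 b m <> 0.
Proof. intros HX m. induction m; intro Hm; simpl.
  intro H; injection H; intros; lra.
  apply Cmult_nz. apply IHm; lia. apply HX; lia. Qed.

Lemma core_final (L t1 t2 h1 h2 l1 l2 a1 a2 b E q s : C) N :
  Cexp L = q -> q <> 0 ->
  (forall n, (1 <= n <= N)%nat -> xco L t1 t2 l1 h2 h1 l2 a1 a2 b n <> 0) ->
  zco L t1 t2 l1 h2 h1 l2 a1 a2 b (S (S N)) = 0 ->
  cpoly L t1 t2 l1 h2 h1 l2 a1 a2 b N E = 0 ->
  coreL L t1 t2 h1 h2 l1 l2 a1 a2 b E q s N = 0.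
Proof.
  intros HL Hq HX HZ HC. rewrite core_ind with (N := N) by auto.
  pose proof (xprod_nz _ _ _ _ _ _ _ _ _ _ N HX N (le_n N)) as HP.
  unfold cpoly in HC. cbv zeta in HC.
  set (p := cpair L t1 t2 l1 h2 h1 l2 a1 a2 b E N) in *.
  set (br := snd p * (E + yco L t1 t2 l1 h2 h1 l2 a1 a2 b (S N)) - fst p * zco L t1 t2 l1 h2 h1 l2 a1 a2 b (S N)) in *.
  assert (Hb : br = 0).
  { transitivity (/ xprod L t1 t2 l1 h2 h1 l2 a1 a2 b N * (xprod L t1 t2 l1 h2 h1 l2 a1 a2 b N * br)).
    field. auto. rewrite HC. ring. }
  rewrite HZ. transitivity (Cpown s (S N) * (- br)). unfold br. ring. rewrite Hb. ring.
Qed.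

Theorem theorem3p2
  (q L t1 t2 : C) (lg : C -> C)
  (h1' h2' l1' l2' al1' al2' be' : C) (N : nat) (E0 : C) :
  (0 < Cmod q < 1)%R ->
  Cexp L = q ->
  (forall s : C, s <> 0 -> Cexp (lg s) = s) ->
  (forall s : C, s <> 0 -> lg (q * s) = L + lg s) ->
  t1 <> 0 -> t2 <> 0 ->
  (h1' - h2' - l1' + l2' + al1' - al2' + be' - 2) / 2 = Cnat N ->
  (forall n : nat, (1 <= n <= N)%nat -> be' <> Cnat n) ->
  (forall n : nat, (1 <= n <= N)%nat -> qpow L (Cnat n - be') <> 1) ->
  cpoly L t1 t2 l1' h2' h1' l2' al1' al2' be' N E0 = 0 ->
  let P := fun s => psum (cn L t1 t2 l1' h2' h1' l2' al1' al2' be' E0) s N in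
  let h_1 := fun s =>
    spow lg ((h1' + h2' - l1' - l2' - al1' - al2' - be' + 2) / 2) s
    * qpoch_inf q (s / (qpow L (l1' - /2) * t1))
    / qpoch_inf q (s / (qpow L (h1' - /2) * t1)) * P s in
  let h_2 := fun s =>
    spow lg (- al2' - Cnat N) s
    * qpoch_inf q (qpow L (h1' + /2) * t1 / s)
    / qpoch_inf q (qpow L (l1' + /2) * t1 / s) * P s in
  (forall s : C, s <> 0 ->
     qpoch_inf q (s / q / (qpow L (h1' - /2) * t1)) <> 0 ->
     qpoch_inf q (s / (qpow L (h1' - /2) * t1)) <> 0 ->
     qpoch_inf q (q * s / (qpow L (h1' - /2) * t1)) <> 0 ->
     A4 q L t1 t2 h1' h2' l1' l2' al1' al2' be' h_1 s = E0 * h_1 s) /\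
  (forall s : C, s <> 0 ->
     qpoch_inf q (qpow L (l1' + /2) * t1 / (s / q)) <> 0 ->
     qpoch_inf q (qpow L (l1' + /2) * t1 / s) <> 0 ->
     qpoch_inf q (qpow L (l1' + /2) * t1 / (q * s)) <> 0 ->
     A4 q L t1 t2 h1' h2' l1' l2' al1' al2' be' h_2 s = E0 * h_2 s).
Proof.
  intros Hq HL Hlg Hlg2 Ht1 Ht2 HN Hbe Hqb Hc P h_1 h_2.
  assert (Hq0 : q <> 0).
  { intro H. rewrite H, Cmod_0 in Hq. lra. }
  assert (Hq1 : (Cmod q < 1)%R) by lra.
  assert (HX : forall n, (1 <= n <= N)%nat -> xco L t1 t2 l1' h2' h1' l2' al1' al2' be' n <> 0).
  { intros n Hn. unfold xco. repeat apply Cmult_nz; auto; try apply qpow_nz.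
    - rewrite (qpow_nat L q n HL). intro H.
      assert (H1 : Cpown q n = 1).
      { transitivity (1 - (1 - Cpown q n)). ring. rewrite H. ring. }
      assert (H2 : Cmod (Cpown q n) = 1%R) by (rewrite H1; apply Cmod_1).
      rewrite Cmod_Cpown in H2.
      assert (H3 : (Cmod q ^ n < 1)%R).
      { destruct n. lia. simpl. pose proof (pow_le1 (Cmod q) n). pose proof (Cmod_ge_0 q).
        pose proof (pow_le (Cmod q) n H3). nra. }
      lra.
    - intro H. apply (Hqb n Hn). transitivity (1 - (1 - qpow L (Cnat n - be'))). ring.
      rewrite H. ring. }
  assert (HZ : zco L t1 t2 l1' h2' h1' l2' al1' al2' be' (S (S N)) = 0).
  { unfold zco. cbv zeta.
    assert (He : Cnat (S (S N)) - 2 + lam1 l1' h2' h1' l2' al1' al2' be' + al2' = 0).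
    { rewrite !Cnat_S, <- HN. unfold lam1. field. }
    rewrite He. replace (qpow L 0) with (RtoC 1). ring.
    unfold qpow, Cexp. replace (0 * L) with (RtoC 0) by ring. simpl.
    rewrite exp_0, cos_0, sin_0. unfold RtoC. f_equal; ring. }
  pose proof (fun s => core_final L t1 t2 h1' h2' l1' l2' al1' al2' be' E0 q s N HL Hq0 HX HZ Hc) as Hcore.
  split.
  - intros s Hs HD1 HD0 HD2.
    apply wrap with (u := qpow L (- lam1 l1' h2' h1' l2' al1' al2' be'))
      (v := qpow L (al1' + al2' + lam1 l1' h2' h1' l2' al1' al2' be'))
      (G1 := spow lg ((h1' + h2' - l1' - l2' - al1' - al2' - be' + 2) / 2) (s / q)
         * qpoch_inf q (s / q / (qpow L (l1' - /2) * t1))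
         / qpoch_inf q (s / q / (qpow L (h1' - /2) * t1)))
      (G0 := spow lg ((h1' + h2' - l1' - l2' - al1' - al2' - be' + 2) / 2) s
         * qpoch_inf q (s / (qpow L (l1' - /2) * t1))
         / qpoch_inf q (s / (qpow L (h1' - /2) * t1)))
      (G2 := spow lg ((h1' + h2' - l1' - l2' - al1' - al2' - be' + 2) / 2) (q * s)
         * qpoch_inf q (q * s / (qpow L (l1' - /2) * t1))
         / qpoch_inf q (q * s / (qpow L (h1' - /2) * t1)))
      (P1 := P (s / q)) (P0 := P s) (P2 := P (q * s)); auto.
    + apply h1_G1; auto. unfold lam1, Cdiv. rewrite !qpow_inv, !qpow_mul. f_equal. field.
    + apply h1_G2; auto. unfold lam1, Cdiv. rewrite !qpow_inv, !qpow_mul. f_equal. field.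
    + exact (Hcore s).
  - intros s Hs HR1 HR0 HR2.
    apply wrap with (u := qpow L (- lam1 l1' h2' h1' l2' al1' al2' be'))
      (v := qpow L (al1' + al2' + lam1 l1' h2' h1' l2' al1' al2' be'))
      (G1 := spow lg (- al2' - Cnat N) (s / q)
         * qpoch_inf q (qpow L (h1' + /2) * t1 / (s / q))
         / qpoch_inf q (qpow L (l1' + /2) * t1 / (s / q)))
      (G0 := spow lg (- al2' - Cnat N) s
         * qpoch_inf q (qpow L (h1' + /2) * t1 / s)
         / qpoch_inf q (qpow L (l1' + /2) * t1 / s))
      (G2 := spow lg (- al2' - Cnat N) (q * s)
         * qpoch_inf q (qpow L (h1' + /2) * t1 / (q * s))
         / qpoch_inf q (qpow L (l1' + /2) * t1 / (q * s)))
      (P1 := P (s / q)) (P0 := P s) (P2 := P (q * s)); auto.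
    + apply h2_G1; auto. f_equal. rewrite <- HN. unfold lam1. field.
    + apply h2_G2; auto. rewrite qpow_mul. f_equal. rewrite <- HN. unfold lam1. field.
    + exact (Hcore s).
Qed.
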